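(* Let $p$ be an odd prime. Then the sequence $\left(\left\lfloor n^{p-1}/p \right\rfloor\right)_{n \ge 1}$ is eventually prime-free.
   Context: A sequence $(a_n)_{n\ge 1}$ of positive integers is called eventually prime-free if there exists an index $n_0$ such that $a_n$ is composite for all $n \ge n_0$. (Here, as in the paper, this is understood as: only finitely many terms $a_n$ are prime.) *)

(* Defs.v *)
From mathcomp Require Import all_boot.
Set Implicit Arguments.
Unset Strict Implicit.
Unset Printing Implicit Defensive.

Definition eventually_prime_free (a : nat -> nat) : Prop :=
  exists n0 : nat, forall n : nat, n0 <= n -> ~~ prime (a n).

(* Main.v *)
Require Import Defs.
From mathcomp Require Import all_boot.
From mathcomp Require Import zify.

Lemma not_prime_mul a B : 2 <= a -> 2 <= B -> ~~ prime (a * B).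
Proof.
move=> ha hB; apply/negP => /primeP [_ H].
have := H a (dvdn_mulr _ (dvdnn a)).
case/orP => /eqP E; nia.
Qed.

Lemma helper A B p : 0 < p -> p %| A -> 2 * p <= A -> 2 <= B ->
  ~~ prime (A * B %/ p).
Proof.
move=> hp /dvdnP [a ->] hA hB.
rewrite mulnAC mulnK //; apply: not_prime_mul => //; nia.
Qed.

Theorem theorem9 (p : nat) (hp : prime p) (hodd : odd p) :
  eventually_prime_free (fun n => n ^ (p - 1) %/ p).
Proof.
have p2 := prime_gt1 hp.
set k := p./2.
have hpk : p = k.*2.+1 by rewrite -[LHS]odd_double_half hodd add1n.
have k1 : 0 < k by move: p2; rewrite hpk; case: (k).
exists (2 * p + 1) => n hn.
set N := n ^ k.
have hN : n <= N by rewrite /N -{1}(expn1 n) leq_pexp2l //; lia.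
have e1 : n ^ (p - 1) = N * N by rewrite /N -expnD hpk; congr (_ ^ _); lia.
have p0 : 0 < p by lia.
case: (boolP (p %| n)) => pn.
  rewrite e1; apply: helper => //; last by lia.
    by apply: dvdn_trans pn _; rewrite /N dvdn_exp.
  by lia.
have ferm := fermat_little n hp.
have e2 : n ^ p = n * (N * N) by rewrite -e1 -expnS hpk; congr (_ ^ _); lia.
have hle : n <= n ^ p by rewrite e2; nia.
move: ferm; move/eqP; rewrite eqn_mod_dvd // e2.
have e3 : n * (N * N) - n = n * ((N - 1) * (N + 1)).
  have : 1 <= N by lia.
  case: (N) => [|M] _ //; rewrite subn1 /=; nia.
rewrite e3 Euclid_dvdM // (negbTE pn) /= => hdiv.
have e4 : n ^ (p - 1) = (N - 1) * (N + 1) + 1.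
  rewrite e1; have : 1 <= N by lia.
  case: (N) => [|M] _ //; rewrite subn1 /=; nia.
rewrite e4 divnDl // (divn_small p2) addn0.
move: hdiv; rewrite Euclid_dvdM // => /orP [h|h].
  by apply: helper => //; lia.
by rewrite mulnC; apply: helper => //; lia.
Qed.
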